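(* In the setting below, suppose $p\geq5$. Then for all distinct $i,j,k\in\mathbb Z/N\mathbb Z$ we have $P^+_{ij}\cap P^+_{jk}\subset P^+_{ik}$.
   Context: Setting: $p,q$ distinct primes, $N=p+q$; $M=(m_{ik})_{i,k\in\mathbb Z/N\mathbb Z}$ has entries in $\mathbb Z/pq\mathbb Z$ and $(e^{2\pi i\,m_{ik}/pq})$ is a complex Hadamard matrix (unimodular entries, orthogonal rows). $L_i(k)=m_{ik}$, $L_{ij}=L_j-L_i$. For $d\mid pq$, $d(\mathbb Z/pq\mathbb Z)$ is the subgroup of multiples of $d$. For distinct $i,j$ there is a partition $\mathbb Z/N\mathbb Z=P_{ij}\sqcup Q_{ij}\sqcup R_{ij}$ and $r\in\mathbb Z/pq\mathbb Z$ with: $\#R_{ij}=2$ and $L_{ij}\equiv r$ on $R_{ij}$; $\#P_{ij}=p-1$ and $L_{ij}(P_{ij})=(r+q(\mathbb Z/pq\mathbb Z))\setminus\{r\}$; $\#Q_{ij}=q-1$ and $L_{ij}(Q_{ij})=(r+p(\mathbb Z/pq\mathbb Z))\setminus\{r\}$. This partition is unique ($R_{ij}$ is the pair of indices where $L_{ij}$ takes its unique repeated value). Put $P^+_{ij}=P_{ij}\cup R_{ij}$, $Q^+_{ij}=Q_{ij}\cup R_{ij}$. *)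

(* Defs.v *)
From HB Require Import structures.
From mathcomp Require Import all_boot all_order all_algebra all_field.
Set Implicit Arguments. Unset Strict Implicit. Unset Printing Implicit Defensive.
Import Order.TTheory GRing.Theory Num.Theory.
Local Open Scope ring_scope.

(* e^{2 pi i / n} in algC: n.-root (-1) is e^{i pi / n} (minimal argument). *)
Definition omega (n : nat) : algC := (n.-root (-1)) ^+ 2.

Definition cexp (n : nat) (m : 'Z_n) : algC := omega n ^+ (val m).

(* (e^{2 pi i m_ik / n})_{ik} is a complex Hadamard matrix:
   unimodular entries (automatic) and pairwise orthogonal rows. *)
Definition hadamard_phase (N n : nat) (M : 'M['Z_n]_N) : Prop :=
  forall i j : 'I_N, i != j ->
    \sum_(k < N) cexp (M i k) * (cexp (M j k))^* = 0.

Definition Lij (N n : nat) (M : 'M['Z_n]_N) (i j : 'I_N) (k : 'I_N) : 'Z_n :=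
  M j k - M i k.

Definition multiples (n d : nat) : {set 'Z_n} := [set (d%:R * y) | y : 'Z_n].

Definition repeated (N n : nat) (M : 'M['Z_n]_N) (i j : 'I_N) (r : 'Z_n) : bool :=
  (1 < #|[set k : 'I_N | Lij M i j k == r]|)%N.

(* P^+_{ij} = P_{ij} \cup R_{ij} = { k | L_{ij}(k) \in r + q(Z/pqZ) },
   r the (unique) repeated value of L_{ij}. *)
Definition Pplus (N n q : nat) (M : 'M['Z_n]_N) (i j : 'I_N) : {set 'I_N} :=
  [set k : 'I_N | [exists r : 'Z_n,
      repeated M i j r && (Lij M i j k - r \in multiples n q)]].

(* Main.v *)
Require Import Defs.
From HB Require Import structures.
From mathcomp Require Import all_boot all_order all_algebra all_field.
From mathcomp Require Import zify.
Import Order.TTheory GRing.Theory Num.Theory.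
Set Implicit Arguments. Unset Strict Implicit. Unset Printing Implicit Defensive.

Module Aux.
Open Scope ring_scope.
Lemma omegaX (n : nat) : (0 < n)%N -> omega n ^+ n = 1.
Proof.
move=> n0; rewrite /omega -exprM mulnC exprM rootCK //.
by rewrite expr2 mulrNN mulr1.
Qed.

Section E.
Variable n : nat.
Hypothesis n1 : (1 < n)%N.

Lemma valZpD (x y : 'Z_n) : val (x + y) = ((val x + val y) %% n)%N.
Proof. by rewrite /=; have e := Zp_cast n1; congr (_ %% _)%N; rewrite ?e //; congr (_ - _)%N. Qed.

Lemma valZpN (x : 'Z_n) : val (- x) = ((n - val x) %% n)%N.
Proof. by rewrite /=; have e := Zp_cast n1; congr (_ %% _)%N; rewrite ?e //; congr (_ - _)%N. Qed.

Lemma cexpD (x y : 'Z_n) : cexp (x + y) = cexp x * cexp y.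
Proof.
rewrite /cexp valZpD expr_mod ?exprD //; apply: omegaX; exact: ltnW.
Qed.

Lemma cexp0 : cexp (0 : 'Z_n) = 1.
Proof. by rewrite /cexp expr0. Qed.

Lemma cexp_conj (x : 'Z_n) : (cexp x)^* = cexp (- x).
Proof.
have h1 : cexp x * cexp (- x) = 1 by rewrite -cexpD subrr cexp0.
have nx : `|cexp x| = 1.
  apply/eqP; rewrite -(@pexpr_eq1 _ _ n) ?normr_ge0 ?(ltnW n1) //.
  by rewrite -normrX /cexp -exprM mulnC exprM omegaX ?(ltnW n1) // expr1n normr1.
have : cexp x * (cexp x)^* = 1 by rewrite -normCK nx expr1n.
move=> h2; apply: (@mulfI _ (cexp x)); last by rewrite h1 h2.
by apply/eqP=> h0; move: h1; rewrite h0 mul0r => /eqP; rewrite eq_sym oner_eq0.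
Qed.
End E.

Lemma sum_dvd_reindex (R : nmodType) (a b : nat) (F : nat -> R) : (0 < a)%N ->
  \sum_(m < a * b | (a %| m)%N) F m = \sum_(j < b) F (a * j)%N.
Proof.
move=> a0; elim: b => [|b IH]; first by rewrite muln0 !big_ord0.
rewrite big_ord_recr /= -IH -!(big_mkord (fun m => (a %| m)%N)).
rewrite mulnS addnC (big_cat_nat _ (leq_addr a (a * b))) //=.
congr (_ + _); rewrite big_ltn_cond; last by rewrite -addn1 leq_add2l.
rewrite (dvdn_mulr _ (dvdnn a)).
rewrite big_nat_cond big1 ?addr0 // => m /andP[/andP[lt1 lt2] dv].
move: dv lt1 lt2; case/dvdnP=> k ->; rewrite [(k * a)%N]mulnC ltn_pmul2l //.
by rewrite -mulnSr ltn_pmul2l // ltnS => l1 l2; move: (leq_trans l1 l2); rewrite ltnn.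
Qed.

Lemma geom_sum (z : algC) k : z ^+ k = 1 ->
  \sum_(m < k) z ^+ m = if z == 1 then k%:R else 0.
Proof.
move=> zk; case: eqP => [->|/eqP z1].
  by rewrite (eq_bigr (fun _ => 1)) ?sumr_const ?card_ord // => i _; rewrite expr1n.
have := subrX1 z k; rewrite zk subrr => /esym /eqP; rewrite mulf_eq0 subr_eq0.
by rewrite (negbTE z1) /= => /eqP.
Qed.

Lemma prim_sum (z : algC) d y : d.-primitive_root z ->
  \sum_(m < d) z ^+ (m * y) = (d %| y)%:R * d%:R.
Proof.
move=> pz; rewrite (eq_bigr (fun m : 'I_d => (z ^+ y) ^+ m)); last first.
  by move=> m _; rewrite -exprM mulnC.
rewrite geom_sum; last by rewrite -exprM mulnC exprM (prim_expr_order pz) expr1n.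
by have := prim_order_dvd pz y; case: (d %| y)%N => <-; rewrite ?mul1r ?mul0r ?eqxx //= ifF //; apply/negbTE.
Qed.

Lemma galois_vanish (I : finType) (z : algC) d (a : I -> nat) :
  d.-primitive_root z -> \sum_(k : I) z ^+ (a k) = 0 ->
  forall m, coprime m d -> \sum_(k : I) z ^+ (m * a k) = 0.
Proof.
move=> pz h m cm; have [u hu] := Qn_aut_exists cm.
transitivity (u (\sum_k z ^+ a k)); last by rewrite h rmorph0.
rewrite rmorph_sum; apply: eq_bigr => k _; rewrite hu; first by rewrite -exprM mulnC.
by rewrite -exprM mulnC exprM (prim_expr_order pz) expr1n.
Qed.

Lemma fourier_vanish (I : finType) (z : algC) d (a : I -> nat) :
  d.-primitive_root z -> \sum_(k : I) z ^+ (a k) = 0 ->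
  forall b, \sum_(k : I) \sum_(m < d | coprime m d) z ^+ (m * (a k + b)) = 0.
Proof.
move=> pz h b; rewrite exchange_big /=; apply: big1 => m cm.
rewrite (eq_bigr (fun k => z ^+ (m * b) * z ^+ (m * a k))); last first.
  by move=> k _; rewrite -exprD mulnDr addnC.
by rewrite -mulr_sumr (galois_vanish pz h cm) mulr0.
Qed.

Lemma dvd_sub_sum (z : algC) n p q y : n = (p * q)%N -> (0 < p)%N -> (0 < q)%N -> n.-primitive_root z ->
  \sum_(m < n | (p %| m)%N) z ^+ (m * y) = (q %| y)%:R * q%:R.
Proof.
move=> -> p0 q0 pz; rewrite (@sum_dvd_reindex _ p q (fun m => z ^+ (m * y))) //.
rewrite (eq_bigr (fun j : 'I_q => (z ^+ (p * y)) ^+ j)); last first.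
  by move=> j _; rewrite -exprM mulnAC mulnC.
rewrite geom_sum; last by rewrite -exprM mulnAC exprM (prim_expr_order pz) expr1n.
by have := prim_order_dvd pz (p * y); rewrite dvdn_pmul2l // => ->; case: eqP; rewrite ?mul1r ?mul0r.
Qed.

Lemma ramanujan_pq (z : algC) p q y : prime p -> prime q -> p != q ->
  (p * q).-primitive_root z ->
  \sum_(m < p * q | coprime m (p * q)) z ^+ (m * y) + (q %| y)%:R * q%:R + (p %| y)%:R * p%:R
  = (p * q %| y)%:R * (p * q)%:R + 1.
Proof.
move=> pp pq npq pz; have p0 := prime_gt0 pp; have q0 := prime_gt0 pq.
have cpq : coprime p q by rewrite prime_coprime // dvdn_prime2 //.
rewrite -(dvd_sub_sum y (erefl _) p0 q0 pz).
rewrite -(dvd_sub_sum y (mulnC p q) q0 p0 pz) -(prim_sum y pz).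
rewrite big_mkcond (big_mkcond (fun m : 'I_(p*q) => (p %| m)%N)) (big_mkcond (fun m : 'I_(p*q) => (q %| m)%N)).
rewrite -!big_split /=.
have n0 : (0 < p*q)%N by rewrite muln_gt0 p0 q0.
rewrite (bigD1 (Ordinal n0)) //= [in RHS](bigD1 (Ordinal n0)) //=.
rewrite !dvdn0 mul0n expr0 /=.
have -> : coprime 0 (p * q) = false.
  rewrite /coprime gcd0n muln_eq1; apply/negbTE/negP => /andP[/eqP e _].
  by move: (prime_gt1 pp); rewrite e.
rewrite add0r [RHS]addrC addrA; congr (_ + _).
apply: eq_bigr => m m0.
have mlt := ltn_ord m.
have m0' : (0 < m)%N by rewrite lt0n; apply: contraNneq m0 => h; apply/eqP/val_inj.
rewrite coprimeMr ![coprime m _]coprime_sym !prime_coprime //.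
case hp: (p %| m)%N; case hq: (q %| m)%N => /=; rewrite ?add0r ?addr0 //.
have : (p * q %| m)%N by rewrite Gauss_dvd // hp hq.
by move/(dvdn_leq m0'); rewrite leqNgt mlt.
Qed.

Lemma ramanujan_p (z : algC) d y : prime d -> d.-primitive_root z ->
  \sum_(m < d | coprime m d) z ^+ (m * y) + 1 = (d %| y)%:R * d%:R.
Proof.
move=> pd pz; rewrite -(prim_sum y pz).
have d0 := prime_gt0 pd.
rewrite [in RHS](bigD1 (Ordinal d0)) //= mul0n expr0 addrC; congr (_ + _).
apply: eq_bigl => m; rewrite coprime_sym prime_coprime //.
congr (~~ _); rewrite -val_eqE /=.
case: m => [[|k] lt] /=; first by rewrite dvdn0.
apply/negbTE/negP => /(dvdn_leq (ltn0Sn k)) le; by move: (leq_ltn_trans le lt); rewrite ltnn.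
Qed.

Lemma sum_natC (I : finType) (F : I -> nat) (c : nat) :
  \sum_(k : I) (F k)%:R * c%:R = (c * \sum_(k : I) F k)%N%:R :> algC.
Proof. by rewrite -mulr_suml -natr_sum -natrM mulnC. Qed.

Lemma count_pq (I : finType) (z : algC) p q (a : I -> nat) :
  prime p -> prime q -> p != q -> (p * q).-primitive_root z ->
  \sum_(k : I) z ^+ (a k) = 0 ->
  forall b, (p * q * \sum_(k : I) (p * q %| a k + b) + #|I|
           = q * \sum_(k : I) (q %| a k + b) + p * \sum_(k : I) (p %| a k + b))%N.
Proof.
move=> pp pq npq pz h b; have F0 := fourier_vanish pz h b.
have E : \sum_(k : I) (\sum_(m < p * q | coprime m (p * q)) z ^+ (m * (a k + b))
   + (q %| a k + b)%:R * q%:R + (p %| a k + b)%:R * p%:R)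
  = \sum_(k : I) ((p * q %| a k + b)%:R * (p * q)%:R + 1).
  by apply: eq_bigr => k _; apply: ramanujan_pq.
rewrite !big_split /= F0 add0r !sum_natC sumr_const -!natrD in E.
by apply/eqP; rewrite -(@eqr_nat algC); apply/eqP; exact: (esym E).
Qed.

Lemma count_p (I : finType) (z : algC) d (a : I -> nat) :
  prime d -> d.-primitive_root z ->
  \sum_(k : I) z ^+ (a k) = 0 ->
  (d * \sum_(k : I) (d %| a k) = #|I|)%N.
Proof.
move=> pd pz h; have F0 := fourier_vanish pz h 0.
have E : \sum_(k : I) (\sum_(m < d | coprime m d) z ^+ (m * (a k + 0)) + 1)
  = \sum_(k : I) ((d %| a k + 0)%:R * d%:R).
  by apply: eq_bigr => k _; apply: ramanujan_p.
rewrite !big_split /= F0 add0r !sum_natC sumr_const in E.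
move/eqP: E; rewrite eq_sym eqr_nat => /eqP E.
by rewrite -[RHS]E; congr (_ * _)%N; apply: eq_bigr => k _; rewrite addn0.
Qed.

Open Scope nat_scope.
Lemma modA1 p q c A B : prime p -> prime q -> p != q ->
  p * q * c + (p + q) = q * A + p * B -> A %% p = 1.
Proof.
move=> pp pq npq e.
have cpq : coprime p q by rewrite prime_coprime // dvdn_prime2.
have e2 : q %% p = (q * A) %% p.
  have := congr1 (modn^~ p) e.
  by rewrite -mulnA addnA -{2}(muln1 p) -mulnDr [p * (_ + _)]mulnC modnMDl addnC [p * B]mulnC modnMDl.
clear e; case: A e2 => [|A'] e2.
  by move: e2; rewrite muln0 mod0n => /eqP; rewrite -/(dvdn p q) dvdn_prime2 // (negbTE npq).
have : p %| q * A' by rewrite -(addnK q (q * A')) -eqn_mod_dvd ?leq_addl // e2 mulnS addnC.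
rewrite Gauss_dvdr // => /dvdnP[k ->].
by rewrite -addn1 modnMDl modn_small // prime_gt1.
Qed.

Lemma sum_eq1 n (f : nat -> nat) : \sum_(i < n) f i = 1 ->
  exists2 i0, i0 < n & forall i, i < n -> f i = (i == i0).
Proof.
move=> h.
have [i0 /= fi0] : exists i0 : 'I_n, 0 < f i0.
  apply/existsP; apply: contraT; rewrite negb_exists => /forallP H.
  by move: h; rewrite big1 // => i _; apply/eqP; rewrite -leqn0 leqNgt H.
exists i0 => // i lti.
move: h; rewrite (bigD1 i0) //=; set S := \sum_(i < n | _) _ => h.
have [h1 h2] : f i0 = 1 /\ S = 0 by lia.
move/eqP: h2; rewrite /S sum_nat_eq0 => /forallP H.
case: (eqVneq (Ordinal lti) i0) => [e|ne] /=.
  by move: h1; rewrite -e /= eqxx.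
have := H (Ordinal lti); rewrite /= ne /= => /eqP ->.
by move: ne; rewrite -val_eqE /= => /negbTE ->.
Qed.

Lemma lemmaA p q (F : nat -> nat) : 0 < p ->
  (forall x, x < q -> F x %% p = 1) -> \sum_(x < q) F x = p + q ->
  exists2 x0, x0 < q & forall x, x < q -> F x = p * (x == x0) + 1.
Proof.
move=> p0 Fm Fs.
have e : \sum_(x < q) F x = (\sum_(x < q) (F x %/ p)) * p + q.
  rewrite (eq_bigr (fun x : 'I_q => F x %/ p * p + 1)); last first.
    by move=> x _; rewrite {1}(divn_eq (F x) p) Fm.
  by rewrite big_split /= big_distrl /= sum_nat_const card_ord muln1.
have : \sum_(x < q) (F x %/ p) = 1.
  apply/eqP; rewrite -(eqn_pmul2r p0) mul1n -(eqn_add2r q) -e Fs //.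
case/(@sum_eq1 q (fun x => F x %/ p)) => x0 lt0 H; exists x0 => // x ltx.
by rewrite {1}(divn_eq (F x) p) Fm // H // mulnC.
Qed.

Lemma sum_eq_one m c : c < m -> \sum_(x < m) (c == x) = 1.
Proof.
move=> hc; rewrite (bigD1 (Ordinal hc)) //= eqxx big1 // => i ne.
by apply/eqP; rewrite eqb0; apply: contra ne => /eqP e; apply/eqP/val_inj.
Qed.

Lemma dvd_shift d n a x : d %| n -> x <= n ->
  (d %| a + (n - x)) = (a %% d == x %% d).
Proof.
move=> dn xn; rewrite addnBA // -eqn_mod_dvd ?(leq_trans xn) ?leq_addl //.
by rewrite -modnDmr (eqP dn) addn0.
Qed.

Lemma structure_nat (I : finType) p q (a : I -> nat) :
  prime p -> prime q -> p != q -> #|I| = p + q ->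
  (forall k, a k < p * q) ->
  (forall b, p * q * \sum_(k : I) (p * q %| a k + b) + #|I|
           = q * \sum_(k : I) (q %| a k + b) + p * \sum_(k : I) (p %| a k + b)) ->
  exists r, forall x, x < p * q ->
    \sum_(k : I) (a k == x) = (x %% q == r %% q) + (x %% p == r %% p).
Proof.
move=> pp pq npq cI alt HE.
have p0 := prime_gt0 pp; have q0 := prime_gt0 pq.
pose A x := \sum_(k : I) (a k %% q == x %% q).
pose B x := \sum_(k : I) (a k %% p == x %% p).
pose C x := \sum_(k : I) (a k == x).
have HE' : forall x, x < p * q -> p * q * C x + (p + q) = q * A x + p * B x.
  move=> x xlt; have := HE (p * q - x); rewrite cI.
  have -> : \sum_(k : I) (p * q %| a k + (p * q - x)) = C x.
    by apply: eq_bigr => k _; rewrite dvd_shift ?(ltnW xlt) // !modn_small.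
  have -> : \sum_(k : I) (q %| a k + (p * q - x)) = A x.
    by apply: eq_bigr => k _; rewrite dvd_shift ?(ltnW xlt) // dvdn_mull.
  have -> : \sum_(k : I) (p %| a k + (p * q - x)) = B x.
    by apply: eq_bigr => k _; rewrite dvd_shift ?(ltnW xlt) // dvdn_mulr.
  by [].
have Am : forall x, x < p * q -> A x %% p = 1.
  by move=> x /HE'; apply: modA1.
have Bm : forall x, x < p * q -> B x %% q = 1.
  move=> x /HE' e; apply: (@modA1 q p (C x) (B x) (A x)) => //; first by rewrite eq_sym.
  by rewrite [q * p]mulnC [q + p]addnC e addnC.
have sumA : \sum_(x < q) A x = p + q.
  rewrite /A exchange_big /= -cI -sum1_card; apply: eq_bigr => k _.
  rewrite (eq_bigr (fun x : 'I_q => ((a k %% q == x) : nat))) ?sum_eq_one ?ltn_mod //.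
  by move=> x _; rewrite (modn_small (ltn_ord x)).
have sumB : \sum_(x < p) B x = q + p.
  rewrite /B exchange_big /= addnC -cI -sum1_card; apply: eq_bigr => k _.
  rewrite (eq_bigr (fun x : 'I_p => ((a k %% p == x) : nat))) ?sum_eq_one ?ltn_mod //.
  by move=> x _; rewrite (modn_small (ltn_ord x)).
have [x0 x0lt Ax] := lemmaA p0 (fun x xl => Am x (leq_trans xl (leq_pmull _ p0))) sumA.
have [y0 y0lt Bx] := lemmaA q0 (fun x xl => Bm x (leq_trans xl (leq_pmulr _ q0))) sumB.
have cpq : coprime p q by rewrite prime_coprime // dvdn_prime2.
exists (chinese p q y0 x0) => x xlt.
rewrite (chinese_modl cpq) (chinese_modr cpq) (modn_small x0lt) (modn_small y0lt).
have eA : A x = A (x %% q) by rewrite /A modn_mod.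
have eB : B x = B (x %% p) by rewrite /B modn_mod.
have := HE' x xlt; rewrite eA eB Ax ?ltn_mod // Bx ?ltn_mod //.
have n0 : 0 < p * q by rewrite muln_gt0 p0 q0.
rewrite -/(C x) => e; apply/eqP; rewrite -(eqn_pmul2l n0).
rewrite -(eqn_add2r (p + q)) e; apply/eqP.
rewrite !mulnDr !muln1 !mulnA [q * p]mulnC; lia.
Qed.

Open Scope ring_scope.
Section Abstract.
Variables (I : finType) (G Zq Zp : zmodType) (fq : G -> Zq) (fp : G -> Zp).
Hypothesis fqD : forall x y, fq (x + y) = fq x + fq y.
Hypothesis fpD : forall x y, fp (x + y) = fp x + fp y.
Hypothesis finj : forall x y, fq x = fq y -> fp x = fp y -> x = y.

Definition cnt (L : I -> G) (x : G) := #|[set k | L k == x]|.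

Definition good (L : I -> G) (r : G) :=
  forall x, cnt L x = ((fq x == fq r) + (fp x == fp r))%N.

Lemma good_F1 L r k : good L r -> fq (L k) = fq r \/ fp (L k) = fp r.
Proof.
move=> g; have : (0 < cnt L (L k))%N by apply/card_gt0P; exists k; rewrite inE.
by rewrite g; case: eqP => [|_]; case: eqP => //; by [left|right|].
Qed.

Lemma good_KC L r (S : {set I}) vq vp : good L r ->
  (forall k, k \in S -> fq (L k) = vq /\ fp (L k) = vp) ->
  (#|S| <= (vq == fq r) + (vp == fp r))%N.
Proof.
move=> g H; have [->|[k0 k0S]] := set_0Vmem S; first by rewrite cards0.
have [h1 h2] := H k0 k0S; rewrite -h1 -h2 -g /cnt.
apply: subset_leq_card; apply/subsetP => k kS; rewrite inE.
have [h3 h4] := H k kS; apply/eqP/finj; by rewrite ?h1 ?h2 ?h3 ?h4.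
Qed.

Lemma abstract_cor (L1 L2 L3 : I -> G) r1 r2 r3 :
  good L1 r1 -> good L2 r2 -> good L3 r3 ->
  (forall k, L3 k = L1 k + L2 k) ->
  (4 < #|[set k | fq (L1 k) == fq r1]|)%N ->
  forall k, fq (L1 k) = fq r1 -> fq (L2 k) = fq r2 -> fq (L3 k) = fq r3.
Proof.
move=> g1 g2 g3 e3 big.
have [E|E] := eqVneq (fq r1 + fq r2) (fq r3).
  by move=> k h1 h2; rewrite e3 fqD h1 h2.
exfalso; move: big; rewrite ltnNge => /negP; apply.
set A := [set k | fq (L1 k) == fq r1].
set B := [set k | fq (L2 k) == fq r2].
set C := [set k | fq (L3 k) == fq r3].
have fq1 : forall k, fq (L1 k) = fq (L3 k) - fq (L2 k) by move=> k; rewrite e3 fqD addrK.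
have fp1 : forall k, fp (L1 k) = fp (L3 k) - fp (L2 k) by move=> k; rewrite e3 fpD addrK.
have fq2 : forall k, fq (L2 k) = fq (L3 k) - fq (L1 k).
  by move=> k; rewrite e3 fqD [fq (L1 k) + _]addrC addrK.
have cAB : (#|A :&: B| <= 1)%N.
  have := @good_KC L3 r3 (A :&: B) (fq r1 + fq r2) (fp r3) g3.
  rewrite (negbTE E) eqxx; apply => k; rewrite !inE => /andP[/eqP h1 /eqP h2].
  have h3 : fq (L3 k) = fq r1 + fq r2 by rewrite e3 fqD h1 h2.
  split => //; case: (good_F1 k g3) => // h; by move: E; rewrite -h h3 eqxx.
have cAC : (#|A :&: C| <= 1)%N.
  have := @good_KC L2 r2 (A :&: C) (fq r3 - fq r1) (fp r2) g2.
  have -> : (fq r3 - fq r1 == fq r2) = false.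
    by apply/negbTE; apply: contra E => /eqP <-; rewrite addrC subrK.
  rewrite eqxx; apply => k; rewrite !inE => /andP[/eqP h1 /eqP h3].
  have h2 : fq (L2 k) = fq r3 - fq r1 by rewrite fq2 h1 h3.
  split => //; case: (good_F1 k g2) => // h; move: E; rewrite -h h2.
  by rewrite addrC subrK eqxx.
have cD : (#|A :\: B :\: C| <= 2)%N.
  have := @good_KC L1 r1 (A :\: B :\: C) (fq r1) (fp r3 - fp r2) g1.
  move=> H; apply: leq_trans (H _) _; last by rewrite eqxx; case: (_ == _).
  move=> k; rewrite !inE => /andP[n3 /andP[n2 /eqP h1]]; split => //.
  case: (good_F1 k g2) => [h|h2]; first by move: n2; rewrite h eqxx.
  case: (good_F1 k g3) => [h|h3]; first by move: n3; rewrite h eqxx.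
  by rewrite fp1 h2 h3.
have sub : A \subset (A :&: B) :|: (A :&: C) :|: (A :\: B :\: C).
  apply/subsetP => k kA; rewrite !in_setU !in_setI !in_setD kA /=.
  by case: (k \in B); case: (k \in C).
apply: leq_trans (subset_leq_card sub) _.
apply: leq_trans (leq_card_setU _ _).1 _.
rewrite -[4%N]/(2 + 2)%N leq_add //.
apply: leq_trans (leq_card_setU _ _).1 _.
by rewrite -[2%N]/(1 + 1)%N leq_add.
Qed.
End Abstract.

Section Phi.
Variables (n d : nat).
Hypotheses (n1 : (1 < n)%N) (d1 : (1 < d)%N) (dn : (d %| n)%N).

Definition phi (x : 'Z_n) : 'Z_d := (nat_of_ord x)%:R.

Lemma phi_nat m : phi (m%:R) = m%:R.
Proof.
by rewrite /phi val_Zp_nat // -(Zp_nat_mod d1) (modn_dvdm _ dn) Zp_nat_mod.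
Qed.

Lemma Zn_nat (x : 'Z_n) : x = (nat_of_ord x)%:R.
Proof. by rewrite natr_Zp. Qed.

Lemma phiD x y : phi (x + y) = phi x + phi y.
Proof. by rewrite {1}(Zn_nat x) {1}(Zn_nat y) -natrD phi_nat natrD. Qed.

Lemma phi_eq x y : (phi x == phi y) = (nat_of_ord x %% d == nat_of_ord y %% d)%N.
Proof. by rewrite /phi -val_eqE /= !val_Zp_nat. Qed.

Lemma multiplesE (z : 'Z_n) : (z \in multiples n d) = (phi z == 0).
Proof.
apply/imsetP/idP => [[y _ ->]|].
  rewrite {1}(Zn_nat y) -natrM phi_nat natrM.
  by rewrite -(Zp_nat_mod d1) modnn mul0r.
move/eqP => h; have := congr1 (@nat_of_ord _) h; rewrite /phi val_Zp_nat //= => h'.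
have /dvdnP[m hm] : (d %| nat_of_ord z)%N by apply/eqP.
exists (m%:R) => //; rewrite {1}(Zn_nat z) hm -natrM mulnC. by [].
Qed.
End Phi.

Lemma phi_inj p q (x y : 'Z_(p * q)) : prime p -> prime q -> p != q ->
  phi q x = phi q y -> phi p x = phi p y -> x = y.
Proof.
move=> pp pq npq hq hp.
have p1 := prime_gt1 pp; have q1 := prime_gt1 pq.
have n1 : (1 < p * q)%N by rewrite (ltn_trans p1) // ltn_Pmulr // ltnW.
have cpq : coprime p q by rewrite prime_coprime // dvdn_prime2.
move/eqP: hq; rewrite (@phi_eq _ q q1) => hq.
move/eqP: hp; rewrite (@phi_eq _ p p1) => hp.
have : (nat_of_ord x == nat_of_ord y %[mod p * q])%N by rewrite chinese_remainder // hp hq.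
have ltx : (nat_of_ord x < p * q)%N by apply: leq_trans (ltn_ord x) _; rewrite Zp_cast.
have lty : (nat_of_ord y < p * q)%N by apply: leq_trans (ltn_ord y) _; rewrite Zp_cast.
by rewrite !modn_small // => /eqP /val_inj.
Qed.

End Aux.
Import Aux.

Section Main.
Variables (p q : nat) (M : 'M['Z_(p * q)]_(p + q)).
Hypotheses (pp : prime p) (pq : prime q) (npq : p != q) (H : hadamard_phase M).

Let p1 : (1 < p)%N := prime_gt1 pp.
Let q1 : (1 < q)%N := prime_gt1 pq.
Let n1 : (1 < p * q)%N.
Proof. by rewrite (ltn_trans p1) // ltn_Pmulr // ltnW. Qed.

Open Scope ring_scope.

Lemma hsum (a b : 'I_(p + q)) : a != b ->
  \sum_(k0 < p + q) omega (p * q) ^+ (nat_of_ord (Lij M a b k0)) = 0.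
Proof.
move=> ab; have ba : b != a by rewrite eq_sym.
rewrite -[RHS](H ba); apply: eq_bigr => k0 _; rewrite (cexp_conj n1) -(cexpD n1) /Lij.
by [].
Qed.

Lemma omega_prim (a b : 'I_(p + q)) : a != b -> (p * q).-primitive_root (omega (p * q)).
Proof.
move=> ab; have h := hsum ab.
have [d pd dn] := prim_order_exists (ltnW n1) (omegaX (ltnW n1)).
have contr : forall d', prime d' -> d'.-primitive_root (omega (p * q)) -> (d' %| p + q)%N.
  move=> d' pd' prd; have := count_p pd' prd h; rewrite card_ord => <-.
  exact: dvdn_mulr.
have cdp : ~~ (p %| d)%N -> coprime d p by move=> hp; rewrite coprime_sym prime_coprime.
have cdq : ~~ (q %| d)%N -> coprime d q by move=> hq; rewrite coprime_sym prime_coprime.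
case hp: (p %| d)%N; case hq: (q %| d)%N.
- have : (p * q %| d)%N by rewrite Gauss_dvd ?hp ?hq // prime_coprime // dvdn_prime2.
  move=> h2; have ed : d = (p * q)%N by apply/eqP; rewrite eqn_dvd dn h2.
  by move: pd; rewrite ed.
- have dp : (d %| p)%N by rewrite -(Gauss_dvdl _ (cdq (negbT hq))).
  have ed : d = p by apply/eqP; rewrite eqn_dvd dp hp.
  rewrite ed in pd; have := contr p pp pd; rewrite dvdn_addr ?dvdnn // dvdn_prime2 //.
  by rewrite (negbTE npq).
- have dq : (d %| q)%N by rewrite -(Gauss_dvdr _ (cdp (negbT hp))).
  have ed : d = q by apply/eqP; rewrite eqn_dvd dq hq.
  rewrite ed in pd; have := contr q pq pd; rewrite addnC dvdn_addr ?dvdnn // dvdn_prime2 //.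
  by rewrite eq_sym (negbTE npq).
- have dq : (d %| q)%N by rewrite -(Gauss_dvdr _ (cdp (negbT hp))).
  have : d == 1%N.
    case/primeP: pq => _ /(_ d dq) /orP[] // /eqP ed.
    by move: hq; rewrite ed dvdnn.
  move/eqP => ed; rewrite ed in pd.
  have w1 : omega (p * q) = 1 by have := prim_expr_order pd; rewrite expr1.
  move: h; rewrite w1 (eq_bigr (fun _ => 1)) ?sumr_const ?card_ord; last by move=> *; rewrite expr1n.
  by move/eqP; rewrite pnatr_eq0 addn_eq0 => /andP[/eqP p0]; move: (prime_gt0 pp); rewrite p0.
Qed.

Lemma card_sum (I : finType) (P : pred I) : #|[set k | P k]| = (\sum_(k : I) (P k : nat))%N.
Proof.
rewrite -sum1_card big_mkcond /=; apply: eq_bigr => k _; rewrite inE.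
by case: (P k).
Qed.

Lemma ltZ (x : 'Z_(p * q)) : (nat_of_ord x < p * q)%N.
Proof. by apply: leq_trans (ltn_ord x) _; rewrite Zp_cast. Qed.

Lemma pair_good (a b : 'I_(p + q)) : a != b ->
  (p * q).-primitive_root (omega (p * q)) ->
  exists r, good (phi q) (phi p) (Lij M a b) r.
Proof.
move=> ab prim; have h := hsum ab.
have HE := count_pq pp pq npq prim h.
have [r Hr] := structure_nat pp pq npq (card_ord _) (fun k => ltZ _) HE.
exists (r%:R) => x; rewrite /cnt card_sum.
rewrite (eq_bigr (fun k => (nat_of_ord (Lij M a b k) == nat_of_ord x : nat))); last first.
  by move=> k _; rewrite val_eqE.
rewrite Hr ?ltZ // !phi_eq // !val_Zp_nat // !(modn_dvdm _ (dvdn_mulr _ (dvdnn p))).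
by rewrite !(modn_dvdm _ (dvdn_mull _ (dvdnn q))).
Qed.

Lemma phiB d (x y : 'Z_(p * q)) : (1 < d)%N -> (d %| p * q)%N -> phi d (x - y) = phi d x - phi d y.
Proof.
move=> d1 dn; apply/eqP; rewrite eq_sym subr_eq -(phiD n1 d1 dn) subrK //.
Qed.

Let qn : (q %| p * q)%N := dvdn_mull _ (dvdnn q).
Let pn : (p %| p * q)%N := dvdn_mulr _ (dvdnn p).

Lemma PplusE (a b : 'I_(p + q)) r : good (phi q) (phi p) (Lij M a b) r ->
  forall k, (k \in Pplus q M a b) = (phi q (Lij M a b k) == phi q r).
Proof.
move=> g k; rewrite /Pplus inE; apply/existsP/eqP => [[r0 /andP[rep mul]]|e].
  have e0 := g r0; rewrite /cnt in e0; move: rep; rewrite /repeated e0.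
  case: eqP => // eq1; case: eqP => // eq2 _.
  have er : r0 = r by apply: (phi_inj pp pq npq).
  move: mul; rewrite -er (multiplesE n1 q1 qn) (phiB _ _ q1 qn) subr_eq0.
  by move/eqP.
exists r; rewrite /repeated; have e0 := g r; rewrite /cnt in e0; rewrite e0 !eqxx /=.
by rewrite (multiplesE n1 q1 qn) (phiB _ _ q1 qn) e subrr.
Qed.

Lemma Pbig (L : 'I_(p + q) -> 'Z_(p * q)) r : (5 <= p)%N -> good (phi q) (phi p) L r ->
  (4 < #|[set k | phi q (L k) == phi q r]|)%N.
Proof.
move=> p5 g; set S := [set k | _].
pose f (t : 'I_5) : 'Z_(p * q) := r + (q * t)%:R.
have fq t : phi q (f t) = phi q r.
  rewrite /f (phiD n1 q1 qn) (phi_nat n1 q1 qn) natrM -(Zp_nat_mod q1) modnn.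
  by rewrite mul0r addr0.
have finj : injective f.
  move=> t t' /addrI /(congr1 (@nat_of_ord _)); rewrite !val_Zp_nat //.
  have lt5 : forall s : 'I_5, (q * s < p * q)%N.
    by move=> s; rewrite mulnC ltn_pmul2r ?prime_gt0 // (leq_trans (ltn_ord s)).
  rewrite !modn_small // => /eqP; rewrite eqn_pmul2l ?prime_gt0 // => /eqP.
  exact: val_inj.
have sub : f @: [set: 'I_5] \subset L @: S.
  apply/subsetP => x /imsetP[t _ ->].
  have : (0 < cnt L (f t))%N by rewrite g fq eqxx.
  case/card_gt0P => k; rewrite inE => /eqP ek.
  by apply/imsetP; exists k; rewrite ?ek // inE ek fq.
have := subset_leq_card sub; rewrite (card_imset _ finj) cardsT card_ord => h5.
exact: leq_trans h5 (leq_imset_card _ _).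
Qed.

End Main.

Close Scope ring_scope.
Theorem corollary6p5 (p q : nat) (M : 'M['Z_(p * q)]_(p + q)) :
  prime p -> prime q -> p != q -> 5 <= p ->
  hadamard_phase M ->
  forall i j k : 'I_(p + q), i != j -> j != k -> i != k ->
    Pplus q M i j :&: Pplus q M j k \subset Pplus q M i k.
Proof.
move=> pp pq npq p5 H i j k ij jk ik.
have p1 := prime_gt1 pp; have q1 := prime_gt1 pq.
have n1 : 1 < p * q by rewrite (ltn_trans p1) // ltn_Pmulr // ltnW.
have qn : q %| p * q := dvdn_mull _ (dvdnn q).
have pn : p %| p * q := dvdn_mulr _ (dvdnn p).
have prim := omega_prim pp pq npq H ij.
have [r1 g1] := pair_good pp pq npq H ij prim.
have [r2 g2] := pair_good pp pq npq H jk prim.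
have [r3 g3] := pair_good pp pq npq H ik prim.
apply/subsetP => x; rewrite inE => /andP[].
rewrite (PplusE pp pq npq g1) (PplusE pp pq npq g2) (PplusE pp pq npq g3).
move=> /eqP h1 /eqP h2; apply/eqP.
have e3 : forall y, Lij M i k y = (Lij M i j y + Lij M j k y)%R.
  by move=> y; rewrite /Lij [RHS]addrC addrA subrK.
have Pb := Pbig pp pq p5 g1.
exact: (abstract_cor (phiD n1 q1 qn) (phiD n1 p1 pn) (fun a b => phi_inj pp pq npq) g1 g2 g3 e3 Pb h1 h2).
Qed.
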